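(* Let $G$ be a connected bipartite graph with color classes $E$ and $V$ and root polytope $Q_G$. Let $C$ be a minimal directed cut of $G$, arising from the splitting $V\cup E=S\cup T$, and let $\lambda_C\colon\mathbf R^E\oplus\mathbf R^V\to\mathbf R$ be the linear functional with $\lambda_C(\mathbf i_{\{x\}})=1$ for $x\in(S\cap V)\cup(T\cap E)$ and $\lambda_C(\mathbf i_{\{x\}})=-1$ for $x\in(S\cap E)\cup(T\cap V)$. Then the hyperplane $\Pi_C=\ker\lambda_C$ intersects $Q_G$ in a facet of $Q_G$. Furthermore, every facet of $Q_G$ arises in this way from some minimal directed cut.
   Context: Bipartite graphs have no multiple edges; every edge joins $E$ to $V$. $Q_G\subset\mathbf R^E\oplus\mathbf R^V$ is the convex hull of $\mathbf i_{\{e\}}+\mathbf i_{\{v\}}$ over edges $ev$ of $G$, where $\mathbf i$ denotes indicator vectors. A cut is the set of edges between the two parts of a partition $S\cup T$ of the vertex set into disjoint subsets; a non-empty cut is minimal if it contains no other non-empty cut. A directed cut is a cut arising from a splitting $V\cup E=S\cup T$ such that $G$ has no edges between $E\cap S$ and $V\cap T$ (so each cut edge joins an element of $S\cap V$ to an element of $T\cap E$). A facet is a face of codimension one. *)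

(* Defs.v *)
From HB Require Import structures.
From mathcomp Require Import all_boot all_order all_algebra.
From mathcomp Require Import reals.

Set Implicit Arguments.
Unset Strict Implicit.
Unset Printing Implicit Defensive.

Import Order.TTheory GRing.Theory Num.Theory.
Local Open Scope ring_scope.

Definition affine_indep (R : realType) (X : finType) (k : nat)
    (p : 'I_k -> X -> R) : Prop :=
  forall c : 'I_k -> R,
    \sum_(i < k) c i = 0 ->
    (forall y : X, \sum_(i < k) c i * p i y = 0) ->
    forall i, c i = 0.

Definition has_aff_indep (R : realType) (X : finType)
    (A : (X -> R) -> Prop) (k : nat) : Prop :=
  exists p : 'I_k -> X -> R, (forall i, A (p i)) /\ affine_indep p.

Definition is_face (R : realType) (X : finType)
    (P F : (X -> R) -> Prop) : Prop :=
  exists (a : X -> R) (c : R),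
    (forall x, P x -> \sum_(y : X) a y * x y <= c) /\
    (forall x, F x <-> (P x /\ \sum_(y : X) a y * x y = c)).

(* F is a facet of P: a face with dim F = dim P - 1, where the (affine)
   dimension of a set is (max number of affinely independent points) - 1.
   Here dim P = n and dim F = n - 1. *)
Definition is_facet (R : realType) (X : finType)
    (P F : (X -> R) -> Prop) : Prop :=
  is_face P F /\
  exists n : nat,
    [/\ has_aff_indep P n.+1, ~ has_aff_indep P n.+2,
        has_aff_indep F n & ~ has_aff_indep F n.+1].

Definition bip_adj (E V : finType) (g : {set E * V}) : rel (E + V)%type :=
  fun x y =>
    match x, y with
    | inl e, inr v => (e, v) \in g
    | inr v, inl e => (e, v) \in g
    | _, _ => false
    end.

Definition bip_connected (E V : finType) (g : {set E * V}) : Prop :=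
  forall x y : (E + V)%type, connect (bip_adj g) x y.

Definition cut (E V : finType) (g : {set E * V}) (S : {set (E + V)%type})
    : {set E * V} :=
  [set p in g | ((inl p.1 : (E + V)%type) \in S)
                != ((inr p.2 : (E + V)%type) \in S)].

Definition minimal_cut (E V : finType) (g : {set E * V})
    (S : {set (E + V)%type}) : Prop :=
  cut g S != set0 /\
  forall S' : {set (E + V)%type},
    cut g S' != set0 -> cut g S' \subset cut g S -> cut g S' = cut g S.

Definition directed_split (E V : finType) (g : {set E * V})
    (S : {set (E + V)%type}) : Prop :=
  forall e v, (e, v) \in g ->
    (inl e : (E + V)%type) \in S -> (inr v : (E + V)%type) \in S.

Definition indic (R : realType) (X : finType) (x : X) : X -> R :=
  fun y => if y == x then 1 else 0.

Definition root_polytope (R : realType) (E V : finType) (g : {set E * V})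
    : ((E + V)%type -> R) -> Prop :=
  fun x => exists w : E * V -> R,
    [/\ (forall p, 0 <= w p),
        (forall p, p \notin g -> w p = 0),
        \sum_(p : E * V) w p = 1 &
        forall y : (E + V)%type,
          x y = \sum_(p : E * V)
                  w p * (indic R (inl p.1 : (E + V)%type) y
                         + indic R (inr p.2 : (E + V)%type) y)].

Definition cut_sign (R : realType) (E V : finType) (S : {set (E + V)%type})
    (y : (E + V)%type) : R :=
  match y with
  | inl _ => if y \in S then -1 else 1
  | inr _ => if y \in S then 1 else -1
  end.

Definition lambda_C (R : realType) (E V : finType) (S : {set (E + V)%type})
    (x : (E + V)%type -> R) : R :=
  \sum_(y : (E + V)%type) cut_sign R S y * x y.

Arguments indic R {X} x y.
Arguments root_polytope R {E V} g x.
Arguments cut_sign R {E V} S y.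
Arguments lambda_C R {E V} S x.

(* Main.v *)
Require Import Defs.
From HB Require Import structures.
From mathcomp Require Import all_boot all_order all_algebra.
From mathcomp Require Import reals.
From mathcomp Require Import zify ring lra.
Set Implicit Arguments. Unset Strict Implicit. Unset Printing Implicit Defensive.
Import Order.TTheory GRing.Theory Num.Theory.
Local Open Scope ring_scope.

Section Main.
Variable R : realType.
Variables E V : finType.
Local Notation X := (E + V)%type.
Local Notation N := #|{: X}|.

Definition q (p : E * V) : X -> R :=
  fun y => indic R (inl p.1 : X) y + indic R (inr p.2 : X) y.

Definition rep (x : X -> R) (w : E * V -> R) :=
  forall y, x y = \sum_(p : E * V) w p * q p y.

Definition conv (H : {set E * V}) (x : X -> R) : Prop :=
  exists w : E * V -> R,
    [/\ (forall p, 0 <= w p), (forall p, p \notin H -> w p = 0),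
        \sum_(p : E * V) w p = 1 & rep x w].

Lemma rootE (g : {set E * V}) x : root_polytope R g x <-> conv g x.
Proof. by []. Qed.

Lemma sum_indic (f : X -> R) z : \sum_(y : X) f y * indic R z y = f z.
Proof.
rewrite (bigD1 z) //= /indic eqxx mulr1 big1 ?addr0 // => y /negPf ->.
by rewrite mulr0.
Qed.

Lemma sum_q (f : X -> R) p : \sum_(y : X) f y * q p y = f (inl p.1) + f (inr p.2).
Proof.
rewrite -!sum_indic -big_split /=; apply: eq_bigr => y _; by rewrite /q mulrDr.
Qed.

Lemma lin_rep (a : X -> R) x w : rep x w ->
  \sum_(y : X) a y * x y = \sum_(p : E * V) w p * (a (inl p.1) + a (inr p.2)).
Proof.
move=> hx.
transitivity (\sum_(y : X) \sum_(p : E * V) w p * (a y * q p y)).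
  apply: eq_bigr => y _; rewrite hx mulr_sumr; apply: eq_bigr => p _; ring.
rewrite exchange_big /=; apply: eq_bigr => p _; by rewrite -mulr_sumr sum_q.
Qed.

Definition ae (y : X) : R := if y is inl _ then 1 else 0.

Lemma conv_ae H x : conv H x -> \sum_(y : X) ae y * x y = 1.
Proof.
case=> w [_ _ s1 hr]; rewrite (lin_rep _ hr) -s1; apply: eq_bigr => p _.
by rewrite /= addr0 mulr1.
Qed.

Lemma conv_q (H : {set E * V}) p : p \in H -> conv H (q p).
Proof.
move=> pH; exists (fun p' => if p' == p then 1 else 0); split.
- by move=> p'; case: ifP.
- by move=> p' np; case: eqP => // e; rewrite e pH in np.
- by rewrite -big_mkcond big_pred1_eq.
- move=> y; rewrite (bigD1 p) //= eqxx mul1r big1 ?addr0 // => p' /negPf ->.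
  by rewrite mul0r.
Qed.


Lemma sum_enum (F : X -> R) : \sum_(j < N) F (enum_val j) = \sum_(x : X) F x.
Proof. rewrite -(big_enum_val (A := {: X})). apply: eq_bigl => x. by rewrite inE. Qed.

Lemma sum_enumP (F : E * V -> R) :
  \sum_(j < #|{: E * V}|) F (enum_val j) = \sum_(x : E * V) F x.
Proof. rewrite -(big_enum_val (A := {: E * V})). apply: eq_bigl => x. by rewrite inE. Qed.

Definition rv (x : X -> R) : 'rV[R]_N := \row_j x (enum_val j).
Definition fv (y : 'rV[R]_N) : X -> R := fun x => y 0 (enum_rank x).

Lemma rvK y : rv (fv y) = y.
Proof. by apply/rowP => j; rewrite mxE /fv enum_valK. Qed.

Lemma fvK x : fv (rv x) =1 x.
Proof. by move=> y; rewrite /fv mxE enum_rankK. Qed.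

Definition Pm k (p : 'I_k -> X -> R) : 'M[R]_(k, N) :=
  \matrix_(i, j) p i (enum_val j).

Lemma mulPm k (c : 'rV_k) p x :
  (c *m Pm p) 0 (enum_rank x) = \sum_i c 0 i * p i x.
Proof. rewrite mxE; apply: eq_bigr => i _; by rewrite mxE enum_rankK. Qed.

Lemma row_Pm k (p : 'I_k -> X -> R) i : row i (Pm p) = rv (p i).
Proof. by apply/rowP => j; rewrite !mxE. Qed.

Lemma rfP k (A : 'M[R]_(k, N)) : (forall c : 'rV_k, c *m A = 0 -> c = 0) -> row_free A.
Proof.
move=> h; rewrite -kermx_eq0; apply/eqP/row_matrixP => i; rewrite row0; apply: h.
by rewrite -row_mul mulmx_ker row0.
Qed.

Lemma rf_to k (A : 'M[R]_(k, N)) : row_free A -> forall c : 'rV_k, c *m A = 0 -> c = 0.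
Proof. by move=> rf c hc; apply: (row_free_inj rf); rewrite hc mul0mx. Qed.

Lemma aff_rf k (p : 'I_k -> X -> R) : (forall i, \sum_(y : X) ae y * p i y = 1) ->
  affine_indep p <-> row_free (Pm p).
Proof.
move=> h1; split.
- move=> ai; apply: rfP => c hc; apply/rowP => i; rewrite mxE.
  have hy : forall y, \sum_(i < k) c 0 i * p i y = 0.
    by move=> y; rewrite -mulPm hc mxE.
  apply: (ai (fun i => c 0 i)) => //.
  transitivity (\sum_(i < k) c 0 i * \sum_(y : X) ae y * p i y).
    by apply: eq_bigr => i' _; rewrite h1 mulr1.
  transitivity (\sum_(y : X) ae y * \sum_(i < k) c 0 i * p i y).
    rewrite (eq_bigr (fun i' => \sum_(y : X) c 0 i' * (ae y * p i' y))); last first.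
      by move=> i' _; rewrite mulr_sumr.
    rewrite exchange_big /=; apply: eq_bigr => y _; rewrite mulr_sumr.
    by apply: eq_bigr => i' _; ring.
  by rewrite big1 // => y _; rewrite hy mulr0.
- move=> rf c _ hy i.
  have: (\row_i c i) *m Pm p = 0.
    apply/rowP => j; rewrite -(enum_valK j) mulPm mxE -[RHS](hy (enum_val j)).
    by apply: eq_bigr => i' _; rewrite mxE.
  by move/(rf_to rf)/rowP/(_ i); rewrite !mxE.
Qed.

Definition MH (H : {set E * V}) : 'M[R]_(#|{: E * V}|, N) :=
  Pm (fun i => if enum_val i \in H then q (enum_val i) else fun _ => 0).

Lemma conv_sub H x : conv H x -> (rv x <= MH H)%MS.
Proof.
case=> w [_ w0 _ hr].
suff -> : rv x = \row_i w (enum_val i) *m MH H by apply: submxMl.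
apply/rowP => j; rewrite -(enum_valK j) mulPm mxE enum_rankK hr -sum_enumP.
apply: eq_bigr => i _; rewrite mxE; case: ifP => // nH.
by rewrite w0 ?nH // !mul0r.
Qed.

Lemma has_le H k : has_aff_indep (conv H) k -> (k <= \rank (MH H))%N.
Proof.
case=> p [hp ai].
have rf : row_free (Pm p) by apply/(aff_rf (fun i => conv_ae (hp i))).
have : (Pm p <= MH H)%MS by apply/row_subP => i; rewrite row_Pm conv_sub.
by move/mxrankS; rewrite (eqP rf).
Qed.

Lemma has_rank H : has_aff_indep (conv H) (\rank (MH H)).
Proof.
set f := maxrankfun (MH H); have rf := maxrowsub_free (MH H).
have inH i : enum_val (f i) \in H.
  apply/negPn/negP => nH.
  have := rf_to rf (c := delta_mx 0 i).
  rewrite -rowE row_rowsub row_Pm (negPf nH).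
  have -> : rv (fun _ => 0) = 0 by apply/rowP => j; rewrite !mxE.
  move=> /(_ erefl) /matrixP /(_ 0 i); rewrite !mxE !eqxx /=.
  by move/eqP; rewrite oner_eq0.
exists (fun i => q (enum_val (f i))); split.
  by move=> i; apply: conv_q.
apply/(aff_rf (fun i => conv_ae (conv_q (inH i)))).
suff -> : Pm (fun i => q (enum_val (f i))) = rowsub f (MH H) by [].
by apply/matrixP => i j; rewrite !mxE (inH i).
Qed.

Lemma has_mono (A : (X -> R) -> Prop) k j :
  has_aff_indep A k -> (j <= k)%N -> has_aff_indep A j.
Proof.
case=> p [hp ai] le; exists (fun i => p (widen_ord le i)); split => // c s0 hy i.
pose C : 'I_k -> R := fun i' => if (insub (val i') : option 'I_j) is Some i0 then c i0 else 0.
have key : forall F : 'I_k -> R, \sum_(i' < k) C i' * F i' = \sum_(i < j) c i * F (widen_ord le i).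
  move=> F; rewrite (bigID (fun i' : 'I_k => (i' < j)%N)) /= [X in _ + X]big1 ?addr0.
    rewrite (big_ord_narrow le); apply: eq_bigr => i' _.
    by rewrite /C /= valK.
  by move=> i' hi; rewrite /C insubN ?mul0r.
have := ai C _ _ (widen_ord le i); rewrite /C /= valK; apply.
  by rewrite -[RHS]s0 (eq_bigr (fun i' => C i' * 1)) ?key; [apply: eq_bigr => i' _; rewrite mulr1|move=> *; rewrite mulr1].
by move=> y; rewrite key hy.
Qed.

Lemma has_iff H k : has_aff_indep (conv H) k <-> (k <= \rank (MH H))%N.
Proof.
split; first exact: has_le.
by move=> le; apply: has_mono (has_rank H) le.
Qed.


Definition ann H := kermx (MH H)^T.

Lemma annP H z : (rv z <= ann H)%MS <->
  forall p, p \in H -> z (inl p.1) + z (inr p.2) = 0.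
Proof.
have key : forall i, (rv z *m (MH H)^T) 0 i =
    if enum_val i \in H then z (inl (enum_val i).1) + z (inr (enum_val i).2) else 0.
  move=> i; rewrite mxE; case: ifP => hi.
    rewrite -sum_q -sum_enum; apply: eq_bigr => j _; by rewrite !mxE hi.
  by rewrite big1 // => j _; rewrite !mxE hi mulr0.
split.
- move/sub_kermxP => h p pH; have := key (enum_rank p).
  by rewrite h mxE enum_rankK pH.
- move=> h; apply/sub_kermxP; apply/rowP => i; rewrite key mxE.
  by case: ifP => // /h.
Qed.

Lemma rank_MH H : \rank (MH H) = (N - \rank (ann H))%N.
Proof. by rewrite /ann mxrank_ker mxrank_tr subKn // rank_leq_col. Qed.

Definition sg (x : X) : R := if x is inl _ then 1 else -1.
Lemma sg2 x : sg x * sg x = 1.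
Proof. by case: x => _ /=; rewrite ?mulr1 ?mulrNN ?mulr1. Qed.
Lemma sg_neq0 x : sg x != 0.
Proof. by case: x => _ /=; rewrite ?oppr_eq0 oner_eq0. Qed.

Definition sgA (A : {set X}) (x : X) : R := if x \in A then sg x else 0.

Lemma ann_sg H : (rv sg <= ann H)%MS.
Proof. by apply/annP => p _ /=; rewrite subrr. Qed.

Lemma rf_diag k (p : 'I_k -> X -> R) (w : 'I_k -> X) :
  (forall i, p i (w i) != 0) -> (forall i j, i != j -> p j (w i) = 0) ->
  row_free (Pm p).
Proof.
move=> h1 h2; apply: rfP => c hc; apply/rowP => i.
have := congr1 (fun M : 'rV[R]_N => M 0 (enum_rank (w i))) hc; rewrite mulPm /=.
rewrite (bigD1 i) // big1 ?addr0 => [|j hj]; last by rewrite h2 ?mulr0 // eq_sym.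
by rewrite !mxE => /eqP; rewrite Monoid.mulm1 mulf_eq0 (negPf (h1 i)) orbF => /eqP.
Qed.

Lemma in_span k (p : 'I_k -> X -> R) (y : X -> R) (c : 'I_k -> R) :
  (forall x, y x = \sum_i c i * p i x) -> (rv y <= Pm p)%MS.
Proof.
move=> h; suff -> : rv y = \row_i c i *m Pm p by apply: submxMl.
apply/rowP => j; rewrite -(enum_valK j) mulPm mxE enum_rankK h.
by apply: eq_bigr => i _; rewrite mxE.
Qed.

Lemma span_in k (p : 'I_k -> X -> R) (y : X -> R) :
  (rv y <= Pm p)%MS -> exists c : 'I_k -> R, forall x, y x = \sum_i c i * p i x.
Proof.
case/submxP => D hD; exists (fun i => D 0 i) => x.
by have := congr1 (fun M : 'rV[R]_N => M 0 (enum_rank x)) hD; rewrite mulPm mxE enum_rankK.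
Qed.

Lemma cut_closed (g : {set E * V}) (A : {set X}) :
  bip_connected g -> cut g A = set0 -> forall a b, a \in A -> b \notin A -> False.
Proof.
move=> gc c0 a b aA bA.
have cl : closed (bip_adj g) A.
  move=> x y; case: x => [e|v]; case: y => [e'|v'] //= h.
  - apply/eqP; apply: contraT => ne.
    have : (e, v') \in cut g A by rewrite inE h /= ne.
    by rewrite c0 inE.
  - apply/eqP; apply: contraT => ne.
    have : (e', v) \in cut g A by rewrite inE h /= eq_sym ne.
    by rewrite c0 inE.
have := closed_connect cl (gc a b); rewrite aA.
by move=> e; rewrite -e in bA.
Qed.

Lemma rank_ann_g (g : {set E * V}) (x0 : X) : bip_connected g -> \rank (ann g) = 1%N.
Proof.
move=> gc; apply/eqP; rewrite eqn_leq; apply/andP; split.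
  apply: leq_trans (rank_leq_row (rv sg)); apply: mxrankS; apply/row_subP => i.
  rewrite -[row i _]rvK; set z := fv _.
  have hz : forall p, p \in g -> z (inl p.1) + z (inr p.2) = 0.
    by apply/annP; rewrite rvK row_sub.
  pose t x := sg x * z x.
  have teq : forall e v, (e, v) \in g -> t (inl e) = t (inr v).
    move=> e v h; rewrite /t /=; move/eqP: (hz _ h); rewrite addr_eq0 => /eqP /= ->.
    by rewrite mul1r mulN1r.
  have cl : closed (bip_adj g) [pred x | t x == t x0].
    move=> x y; case: x => [e|v]; case: y => [e'|v'] //= h.
    - by rewrite !inE (teq _ _ h).
    - by rewrite !inE (teq _ _ h).
  have tc : forall x, t x = t x0.
    by move=> x; have := closed_connect cl (gc x0 x); rewrite inE eqxx => /esym /eqP.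
  have -> : rv z = t x0 *: rv sg.
    apply/rowP => j; rewrite !mxE -(tc (enum_val j)) /t.
    by rewrite mulrC mulrA sg2 mul1r.
  by apply: scalemx_sub.
apply: leq_trans (mxrankS (ann_sg g)); rewrite rank_rV lt0b.
apply/eqP => h; have := congr1 (fun M : 'rV[R]_N => M 0 (enum_rank x0)) h.
by rewrite !mxE enum_rankK; apply/eqP; apply: sg_neq0.
Qed.


Lemma has_ext (A B : (X -> R) -> Prop) k :
  (forall x, A x <-> B x) -> has_aff_indep A k -> has_aff_indep B k.
Proof. by move=> h [p [hp ai]]; exists p; split => // i; apply/h. Qed.

Lemma faceA (g : {set E * V}) (f : E * V -> R) (L : (X -> R) -> R) :
  (forall p, p \in g -> 0 <= f p) ->
  (forall x w, \sum_(p : E * V) w p = 1 -> rep x w -> L x = \sum_(p : E * V) w p * f p) ->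
  forall x, (conv g x /\ L x = 0) <-> conv [set p in g | f p == 0] x.
Proof.
move=> f0 hL x; split.
- case=> [[w [w0 wg s1 hr]] hLx]; exists w; split => //.
  have term0 : forall p, w p * f p = 0.
    move=> p; apply: (@psumr_eq0P _ _ xpredT (fun p => w p * f p)) => //; last first.
      by rewrite -(hL x w s1 hr).
    move=> p' _; case: (boolP (p' \in g)) => [pg|/wg ->]; last by rewrite mul0r.
    by rewrite mulr_ge0 // f0.
  move=> p; rewrite inE negb_and => /orP [/wg //| fp].
  by move/eqP: (term0 p); rewrite mulf_eq0 (negPf fp) orbF => /eqP.
- case=> w [w0 wH s1 hr]; split.
    exists w; split => // p pg; apply: wH; by rewrite inE negb_and pg.
  rewrite (hL x w s1 hr) big1 // => p _.
  case: (boolP (p \in [set p in g | f p == 0])) => [|/wH ->]; last by rewrite mul0r.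
  by rewrite inE => /andP [_ /eqP ->]; rewrite mulr0.
Qed.

Definition fS (S : {set X}) (p : E * V) : R :=
  cut_sign R S (inl p.1) + cut_sign R S (inr p.2).

Lemma fS_prop (g : {set E * V}) S p : directed_split g S -> p \in g ->
  0 <= fS S p /\ (fS S p == 0) = (p \notin cut g S).
Proof.
case: p => e v hd pg; have := hd e v pg; rewrite /fS inE pg /= /cut_sign.
case: (inl e \in S); case: (inr v \in S) => //= h; try by have := h isT.
all: split; [lra | first [ apply/eqP; lra | apply/negbTE/eqP; lra ]].
Qed.

Lemma lambda_rep S x w : rep x w -> lambda_C R S x = \sum_(p : E * V) w p * fS S p.
Proof. by move=> hr; rewrite /lambda_C (lin_rep _ hr). Qed.

Lemma sgA_ann (H : {set E * V}) (A : {set X}) :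
  (forall p, p \in H -> (inl p.1 \in A) = (inr p.2 \in A)) -> (rv (sgA A) <= ann H)%MS.
Proof.
move=> h; apply/annP => p /h; rewrite /sgA => ->.
by case: (inr p.2 \in A); rewrite /= ?subrr ?addr0.
Qed.

Definition p2 (A : {set X}) (i : 'I_2) : X -> R :=
  if val i == 0%N then sgA A else sgA (~: A).

Lemma rf2 (A : {set X}) a b : a \in A -> b \notin A -> row_free (Pm (p2 A)).
Proof.
move=> aA bA.
apply: (rf_diag (w := fun i : 'I_2 => if val i == 0%N then a else b)).
- move=> [[|[|i]] hi] //=; rewrite /p2 /sgA /= ?inE ?aA ?(negbTE bA) /=; exact: sg_neq0.
- move=> [[|[|i]] hi] // [[|[|j]] hj] //= _.
  all: by rewrite /p2 /sgA /= ?inE ?aA ?(negbTE bA).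
Qed.

Lemma rank2 (A : {set X}) a b : a \in A -> b \notin A -> \rank (Pm (p2 A)) = 2%N.
Proof. by move=> aA bA; apply/eqP; apply: rf2 aA bA. Qed.

Lemma span2 (A : {set X}) y : (rv y <= Pm (p2 A))%MS ->
  exists c0 c1, forall x, y x = c0 * sgA A x + c1 * sgA (~: A) x.
Proof.
case/span_in => c hc; exists (c ord0), (c (lift ord0 ord0)) => x.
by rewrite hc big_ord_recl big_ord1.
Qed.

Lemma cut_compl (g : {set E * V}) S : cut g (~: S) = cut g S.
Proof.
by apply/setP => p; rewrite !inE; case: (p \in g); case: (inl p.1 \in S); case: (inr p.2 \in S).
Qed.


Lemma side_const (g : {set E * V}) S (t : X -> R) : bip_connected g -> minimal_cut g S ->
  (forall e v, (e, v) \in g -> (e, v) \notin cut g S -> t (inl e) = t (inr v)) ->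
  forall K : {set X}, cut g K = cut g S -> forall x0 x, x0 \in K -> x \in K -> t x = t x0.
Proof.
move=> gc [cne cmin] ht K hK x0 x x0K xK.
apply/eqP; apply: contraT => nx.
have fact : forall e v, (e, v) \in g -> inl e \in K -> inr v \in K ->
    (t (inl e) == t x0) = (t (inr v) == t x0).
  move=> e v pg eK vK; rewrite (ht e v pg) //.
  by rewrite -hK inE pg /= eK vK.
set S1 := [set y in K | t y == t x0].
set S2 := [set y in K | t y != t x0].
have sub1 : cut g S1 \subset cut g S.
  apply/subsetP => -[e v]; rewrite -hK !inE /= => /andP [pg h]; rewrite pg /=.
  move: h (fact e v pg); case: (inl e \in K); case: (inr v \in K) => //=.
  by move=> h /(_ isT isT) he; rewrite he eqxx in h.
have [c1|c1] := eqVneq (cut g S1) set0.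
  by have [] := cut_closed gc c1 (a := x0) (b := x); rewrite !inE ?x0K ?eqxx ?xK ?(negbTE nx).
have e1 := cmin _ c1 sub1.
have c2 : cut g S2 = set0.
  apply/setP => -[e v]; rewrite [in RHS]inE.
  have := congr1 (fun A : {set E * V} => (e, v) \in A) e1; have := congr1 (fun A : {set E * V} => (e, v) \in A) hK.
  rewrite /= !inE /= => hK' h1'; rewrite -hK' in h1'; move: h1' (fact e v).
  case: ((e, v) \in g) => //= h1' fct; move: h1' (fct isT).
  case: (inl e \in K); case: (inr v \in K); case: (t (inl e) == t x0);
    case: (t (inr v) == t x0) => //= h f; try by have := f isT isT.
by have [] := cut_closed gc c2 (a := x) (b := x0); rewrite !inE ?x0K ?eqxx ?xK ?nx.
Qed.


Lemma part1 (g : {set E * V}) S : bip_connected g -> minimal_cut g S -> directed_split g S ->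
  is_facet (root_polytope R g) (fun x => root_polytope R g x /\ lambda_C R S x = 0).
Proof.
move=> gc hmin hd.
set H := [set p in g | fS S p == 0].
have hF : forall x, (root_polytope R g x /\ lambda_C R S x = 0) <-> conv H x.
  apply: faceA; first by move=> p pg; case: (fS_prop hd pg).
  by move=> x w _ hr; apply: lambda_rep.
have hH : forall p, p \in H -> p \in g /\ p \notin cut g S.
  move=> p; rewrite inE => /andP [pg h]; split => //.
  by case: (fS_prop hd pg) => _ <-.
have hH' : forall p, p \in g -> p \notin cut g S -> p \in H.
  move=> p pg pc; rewrite inE pg /=; by case: (fS_prop hd pg) => _ ->.
have memH : forall p, p \in H -> (inl p.1 \in S) = (inr p.2 \in S).
  move=> p /hH [pg]; rewrite inE pg /= negbK => /eqP //.
have [[e0 v0] p0c] : exists p0, p0 \in cut g S by case: hmin => /set0Pn.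
move: (p0c); rewrite inE => /andP [p0g hne] /=.
have eS : (inl e0 : X) \notin S.
  by apply/negP => h; move: hne; rewrite /= h (hd e0 v0 p0g h).
have sS : (inr v0 : X) \in S.
  by move: hne; case: (inr v0 \in S) => //; rewrite (negbTE eS).
have s'T : (inl e0 : X) \in ~: S by rewrite inE.
have rg : \rank (ann g) = 1%N := rank_ann_g (inr v0) gc.
have sub2 : (Pm (p2 S) <= ann H)%MS.
  apply/row_subP => i; rewrite row_Pm /p2; case: ifP => _; apply: sgA_ann => p /memH h.
    by [].
  by rewrite !inE h.
have rH : \rank (ann H) = 2%N.
  apply/eqP; rewrite eqn_leq; apply/andP; split; last first.
    by rewrite -(rank2 sS eS) mxrankS.
  apply: leq_trans (rank_leq_row (Pm (p2 S))); apply: mxrankS; apply/row_subP => i.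
  rewrite -[row i _]rvK; set z := fv _.
  have hz : forall p, p \in H -> z (inl p.1) + z (inr p.2) = 0.
    by apply/annP; rewrite rvK row_sub.
  pose t x := sg x * z x.
  have ht : forall e v, (e, v) \in g -> (e, v) \notin cut g S -> t (inl e) = t (inr v).
    move=> e v pg pc; have := hz _ (hH' _ pg pc); rewrite /t /= => he; lra.
  have cS := side_const gc hmin ht (erefl _) sS.
  have cT := side_const gc hmin ht (cut_compl g S) s'T.
  apply: (in_span (c := fun i => if val i == 0%N then t (inr v0) else t (inl e0))) => x.
  rewrite big_ord_recl big_ord1 /= /p2 /sgA /=.
  have zx : z x = sg x * t x by rewrite /t mulrA sg2 mul1r.
  rewrite zx inE; case: (boolP (x \in S)) => xS /=.
    by rewrite (cS x xS) mulr0 addr0 mulrC.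
  by rewrite (cT x) ?inE // mulr0 add0r mulrC.
have N2 : (2 <= N)%N by rewrite -rH rank_leq_row.
have rMg : \rank (MH g) = (N - 1)%N by rewrite rank_MH rg.
have rMH : \rank (MH H) = (N - 2)%N by rewrite rank_MH rH.
have lamN : forall x, \sum_(y : X) - cut_sign R S y * x y = - lambda_C R S x.
  move=> x; rewrite /lambda_C -sumrN; apply: eq_bigr => y _; by rewrite mulNr.
split.
  exists (fun y => - cut_sign R S y), 0; split.
  - move=> x [w [w0 wg s1 hr]]; rewrite lamN oppr_le0 (lambda_rep _ hr).
    apply: sumr_ge0 => p _; case: (boolP (p \in g)) => [pg|/wg ->]; last by rewrite mul0r.
    by rewrite mulr_ge0 //; case: (fS_prop hd pg).
  - move=> x; rewrite lamN; split => -[hp hl]; split => //; first by rewrite hl oppr0.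
    by apply/eqP; rewrite -oppr_eq0 hl.
exists (N - 2)%N; split.
- apply: (has_ext (fun x => iff_sym (rootE g x))); apply/has_iff; rewrite rMg; lia.
- move=> h; have := has_le (has_ext (rootE g) h); rewrite rMg; lia.
- apply: (has_ext (fun x => iff_sym (hF x))); apply/has_iff; rewrite rMH; lia.
- move=> h; have := has_le (has_ext hF h); rewrite rMH; lia.
Qed.


Lemma bool4 (a b a1 b1 : bool) : a != b -> a1 != b1 ->
  (a = a1 /\ b = b1) \/ (a = b1 /\ b = a1).
Proof. by case: a; case: b; case: a1; case: b1 => //; auto. Qed.

Lemma part2 (g : {set E * V}) F : bip_connected g -> is_facet (root_polytope R g) F ->
  exists S : {set X}, [/\ minimal_cut g S, directed_split g S &
    forall x, F x <-> (root_polytope R g x /\ lambda_C R S x = 0)].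
Proof.
move=> gc [[a [c [hle hF]]] [n [hP1 hP2 hF1 hF2]]].
pose f (p : E * V) := c - (a (inl p.1) + a (inr p.2)).
have f0 : forall p, p \in g -> 0 <= f p.
  move=> p pg; have := hle _ (conv_q pg); rewrite sum_q /f; lra.
have hL : forall x w, \sum_(p : E * V) w p = 1 -> rep x w ->
    c - \sum_(y : X) a y * x y = \sum_(p : E * V) w p * f p.
  move=> x w s1 hr; rewrite (lin_rep _ hr) -{1}(mul1r c) -s1 mulr_suml -sumrB.
  by apply: eq_bigr => p _; rewrite /f mulrBr.
have fa := faceA f0 hL.
set H := [set p in g | f p == 0].
have hFH : forall x, F x <-> conv H x.
  move=> x; split => [/hF [hp hl]| /(fa x) [hp hl]].
    by apply/(fa x); split => //; rewrite hl subrr.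
  by apply/hF; split => //; apply/eqP; rewrite eq_sym -subr_eq0 hl.
have rg : \rank (MH g) = n.+1.
  apply/eqP; rewrite eqn_leq; apply/andP; split.
    rewrite leqNgt; apply/negP => h; apply: hP2.
    by apply: (has_ext (fun x => iff_sym (rootE g x))); apply/has_iff.
  exact: (has_le (has_ext (rootE g) hP1)).
have rH : \rank (MH H) = n.
  apply/eqP; rewrite eqn_leq; apply/andP; split.
    rewrite leqNgt; apply/negP => h; apply: hF2.
    by apply: (has_ext (fun x => iff_sym (hFH x))); apply/has_iff.
  exact: (has_le (has_ext hFH hF1)).
have N1 : (0 < N)%N by have := rank_leq_col (MH g); rewrite rg; lia.
have rag := rank_ann_g (enum_val (Ordinal N1)) gc.
have raH : \rank (ann H) = 2%N.
  have := rank_MH g; have := rank_MH H; rewrite rag rg rH.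
  have := rank_leq_row (ann H); lia.
have [[e0 v0] /andP [p0g fp0]] : exists p0, (p0 \in g) && (f p0 != 0).
  case: (boolP [exists p, (p \in g) && (f p != 0)]) => [/existsP //|/existsPn hno].
  have hHg : H = g.
    apply/setP => p; rewrite inE; case: (boolP (p \in g)) => //= pg.
    by have := hno p; rewrite pg /= negbK.
  by move: rH; rewrite hHg rg; lia.
pose z (y : X) := a y - c / 2.
pose t (x : X) := sg x * z x.
have hft : forall e v, f (e, v) = t (inr v) - t (inl e).
  move=> e v; rewrite /f /t /z /=; lra.
have zH : (rv z <= ann H)%MS.
  apply/annP => -[e v]; rewrite inE => /andP [_ /eqP]; rewrite /f /z /=; lra.
have tH : forall p, p \in H -> t (inl p.1) = t (inr p.2).
  move=> [e v]; rewrite inE => /andP [_ /eqP]; rewrite hft /=; lra.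
set S := [set x | t x == t (inr v0)].
have tlt : t (inl e0) < t (inr v0).
  have := f0 _ p0g; move: fp0; rewrite hft => h1 h2.
  by rewrite -subr_gt0 lt0r h1 h2.
have eS : (inl e0 : X) \notin S by rewrite inE; apply/eqP => h; move: tlt; rewrite h ltxx.
have sS : (inr v0 : X) \in S by rewrite inE.
have memS : forall p, p \in H -> (inl p.1 \in S) = (inr p.2 \in S).
  by move=> p /tH h; rewrite !inE h.
have sub2 : (Pm (p2 S) <= ann H)%MS.
  apply/row_subP => i; rewrite row_Pm /p2; case: ifP => _; apply: sgA_ann => p /memS h.
    by [].
  by rewrite !in_setC h.
have sup2 : (ann H <= Pm (p2 S))%MS.
  by have := mxrank_leqif_sup sub2; rewrite raH (rank2 sS eS); case=> _ <-.
have toff : forall x, x \notin S -> t x = t (inl e0).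
  have [c0 [c1 hzc]] := span2 (submx_trans zH sup2).
  have tx : forall x, x \notin S -> t x = c1.
    move=> x xS; rewrite /t hzc /sgA in_setC (negbTE xS) /=.
    by rewrite mulr0 add0r mulrCA sg2 mulr1.
  by move=> x xS; rewrite !tx.
have ton : forall x, x \in S -> t x = t (inr v0) by move=> x; rewrite inE => /eqP.
have hd : directed_split g S.
  move=> e v pg eS'; apply/negPn/negP => vS.
  have := f0 _ pg; rewrite hft (ton _ eS') (toff _ vS) => hh.
  suff : t (inl e0) < t (inl e0) by rewrite ltxx.
  lra.
have cutf : forall p, p \in g -> (f p == 0) = (p \notin cut g S).
  move=> [e v] pg; rewrite inE pg /= negbK hft subr_eq0.
  case: (boolP (inl e \in S)) => eS1; case: (boolP (inr v \in S)) => vS1.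
  - by rewrite (ton _ eS1) (ton _ vS1) !eqxx.
  - rewrite (ton _ eS1) (toff _ vS1) /=; apply/negbTE/eqP => h.
    suff : t (inl e0) < t (inl e0) by rewrite ltxx.
    lra.
  - rewrite (toff _ eS1) (ton _ vS1) /=; apply/negbTE/eqP => h.
    suff : t (inl e0) < t (inl e0) by rewrite ltxx.
    lra.
  - by rewrite (toff _ eS1) (toff _ vS1) !eqxx.
have HH' : H = [set p in g | fS S p == 0].
  apply/setP => p; rewrite !inE; case: (boolP (p \in g)) => //= pg.
  by rewrite cutf //; case: (fS_prop hd pg) => _ ->.
have fa' := faceA (fun p pg => proj1 (fS_prop hd pg)) (fun x w _ hr => lambda_rep S hr).
clearbody S.
exists S; split => //.
- split.
    by apply/set0Pn; exists (e0, v0); rewrite inE p0g /= (negbTE eS) sS.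
  move=> S' c' sub'.
  have memS' : forall p, p \in H -> (inl p.1 \in S') = (inr p.2 \in S').
    move=> p pH; have pg : p \in g by move: pH; rewrite inE => /andP [].
    have pc : p \notin cut g S by rewrite -cutf //; move: pH; rewrite inE => /andP [].
    have pc' : p \notin cut g S' by apply: contra pc; apply: (subsetP sub').
    by move: pc'; rewrite inE pg /= negbK => /eqP.
  have [d0 [d1 hd']] := span2 (submx_trans (sgA_ann memS') sup2).
  have key : forall x, (if x \in S' then 1 else 0 : R) = if x \in S then d0 else d1.
    move=> x; have := hd' x; rewrite /sgA in_setC.
    by case: (x \in S'); case: (x \in S) => /=; case: x => y /= h; lra.
  have hsame : forall x y, (x \in S) = (y \in S) -> (x \in S') = (y \in S').
    move=> x y hxy; have hx := key x; have hy := key y; rewrite hxy in hx.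
    have : (if x \in S' then 1 else 0 : R) = (if y \in S' then 1 else 0) by rewrite hx hy.
    by case: (x \in S'); case: (y \in S') => // /eqP; rewrite ?oner_eq0 // eq_sym oner_eq0.
  apply/eqP; rewrite eqEsubset sub' /=; apply/subsetP => -[e v].
  have [[e1 v1] p1c] := set0Pn _ c'.
  have p1c2 := subsetP sub' _ p1c.
  move: p1c p1c2; rewrite !inE /= => /andP [_ h1'] /andP [_ h1] /andP [pg h].
  rewrite pg /=.
  case: (bool4 h h1) => -[ea eb].
    by rewrite (hsame _ _ ea) (hsame _ _ eb).
  by rewrite (hsame _ _ ea) (hsame _ _ eb) eq_sym.
- move=> x; split => [/hFH | hx].
    by rewrite HH' => /(fa' x).
  by apply/hFH; rewrite HH'; apply/(fa' x).
Qed.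

Theorem proposition3p6_aux (g : {set E * V}) (Gconn : bip_connected g) :
  (forall S : {set (E + V)%type},
     minimal_cut g S -> directed_split g S ->
     is_facet (root_polytope R g)
              (fun x => root_polytope R g x /\ lambda_C R S x = 0))
  /\
  (forall F : ((E + V)%type -> R) -> Prop,
     is_facet (root_polytope R g) F ->
     exists S : {set (E + V)%type},
       [/\ minimal_cut g S, directed_split g S &
           forall x, F x <-> (root_polytope R g x /\ lambda_C R S x = 0)]).
Proof.
split.
  by move=> S hm hd; apply: part1.
by move=> F hF; apply: part2.
Qed.

End Main.

Unset Implicit Arguments.

Theorem proposition3p6 (R : realType) (E V : finType) (g : {set E * V})
  (Gconn : bip_connected g) :
  (forall S : {set (E + V)%type},
     minimal_cut g S -> directed_split g S ->
     is_facet (root_polytope R g)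
              (fun x => root_polytope R g x /\ lambda_C R S x = 0))
  /\
  (forall F : ((E + V)%type -> R) -> Prop,
     is_facet (root_polytope R g) F ->
     exists S : {set (E + V)%type},
       [/\ minimal_cut g S, directed_split g S &
           forall x, F x <-> (root_polytope R g x /\ lambda_C R S x = 0)]).
Proof. exact: proposition3p6_aux. Qed.
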